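(* Let $\Omega\subseteq\mathbb{C}$ be a domain and let $d_\Omega$ be a distance on $\Omega$ which is continuous as a function $\Omega\times\Omega\to[0,\infty)$ (with respect to the Euclidean topology) and inner. Then the topology induced by $d_\Omega$ coincides with the Euclidean topology on $\Omega$.
   Context: Fix an integer $n\ge0$. A $C^n$-path from $x$ to $y$ in $\Omega$ is a continuous map $\gamma:[0,1]\to\Omega$, $n$ times differentiable on $(0,1)$, with $\gamma(0)=x$, $\gamma(1)=y$; a piecewise $C^n$-path is a finite concatenation of such paths. For a distance $d_\Omega$ on $\Omega$ and a path $\gamma$, its length is $L_{d_\Omega}(\gamma)=\sup_\delta\sum_{j=1}^k d_\Omega(\gamma(t_{j-1}),\gamma(t_j))$, the supremum over all partitions $\delta=\{0=t_0<t_1<\dots<t_k=1\}$. The inner pseudodistance is $d_\Omega^{i}(x,y)=\inf L_{d_\Omega}(\gamma)$ over piecewise $C^n$-paths $\gamma$ from $x$ to $y$; always $d_\Omega\le d^i_\Omega$, and $d_\Omega$ is called inner if $d_\Omega=d_\Omega^i$. *)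

(* Defs.v *)
(* classical reals. The complex plane C is modelled as R*R. *)
From Stdlib Require Import Reals List.
Open Scope R_scope.

Definition pt := (R * R)%type.

Definition edist (p q : pt) : R :=
  sqrt ((fst p - fst q) ^ 2 + (snd p - snd q) ^ 2).

Definition eopen (U : pt -> Prop) : Prop :=
  forall x, U x -> exists r, 0 < r /\ forall y, edist x y < r -> U y.

Definition connected (O : pt -> Prop) : Prop :=
  forall U V : pt -> Prop, eopen U -> eopen V ->
    (forall x, O x -> U x \/ V x) ->
    (forall x, O x -> U x -> V x -> False) ->
    (forall x, O x -> ~ U x) \/ (forall x, O x -> ~ V x).

Definition domain (O : pt -> Prop) : Prop :=
  (exists x, O x) /\ eopen O /\ connected O.

Definition is_distance (O : pt -> Prop) (d : pt -> pt -> R) : Prop :=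
  (forall x y, O x -> O y -> 0 <= d x y) /\
  (forall x y, O x -> O y -> (d x y = 0 <-> x = y)) /\
  (forall x y, O x -> O y -> d x y = d y x) /\
  (forall x y z, O x -> O y -> O z -> d x z <= d x y + d y z).

Definition d_continuous (O : pt -> Prop) (d : pt -> pt -> R) : Prop :=
  forall x y, O x -> O y -> forall eps, 0 < eps -> exists delta, 0 < delta /\
    forall x' y', O x' -> O y' -> edist x x' < delta -> edist y y' < delta ->
      Rabs (d x' y' - d x y) < eps.

Definition ndiff_on (n : nat) (f : R -> R) (a b : R) : Prop :=
  exists F : nat -> R -> R,
    (forall t, a < t < b -> F O t = f t) /\
    (forall k, (k < n)%nat -> forall t, a < t < b ->
       derivable_pt_lim (F k) t (F (S k) t)).

Definition Cn_path (n : nat) (O : pt -> Prop) (g : R -> pt) (x y : pt) : Prop :=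
  (forall t, 0 <= t <= 1 -> O (g t)) /\
  (forall t, 0 <= t <= 1 -> forall eps, 0 < eps -> exists delta, 0 < delta /\
     forall s, 0 <= s <= 1 -> Rabs (s - t) < delta -> edist (g t) (g s) < eps) /\
  ndiff_on n (fun t => fst (g t)) 0 1 /\
  ndiff_on n (fun t => snd (g t)) 0 1 /\
  g 0 = x /\ g 1 = y.

Inductive pw_path (n : nat) (O : pt -> Prop) : pt -> pt -> list (R -> pt) -> Prop :=
  | pw_one : forall g x y, Cn_path n O g x y -> pw_path n O x y (g :: nil)
  | pw_cons : forall g l x z y, Cn_path n O g x z -> pw_path n O z y l ->
              pw_path n O x y (g :: l).

Definition partition (t : nat -> R) (k : nat) : Prop :=
  t O = 0 /\ t k = 1 /\ forall j, (j < k)%nat -> t j < t (S j).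

Fixpoint psum (d : pt -> pt -> R) (g : R -> pt) (t : nat -> R) (k : nat) : R :=
  match k with
  | O => 0
  | S j => psum d g t j + d (g (t j)) (g (t (S j)))
  end.

(* L_d(g) <= M, where L_d(g) is the sup over partitions of the sums *)
Definition length_le (d : pt -> pt -> R) (g : R -> pt) (M : R) : Prop :=
  forall t k, partition t k -> psum d g t k <= M.

(* length of a concatenation (sum of the lengths of the pieces) is <= M *)
Fixpoint pw_length_le (d : pt -> pt -> R) (l : list (R -> pt)) (M : R) : Prop :=
  match l with
  | nil => 0 <= M
  | g :: r => exists m, length_le d g m /\ pw_length_le d r (M - m)
  end.

(* d is inner: d = d^i, i.e. (since d <= d^i always) for all x,y in O,
   inf { L_d(g) : g piecewise C^n from x to y } <= d x y. *)
Definition inner (n : nat) (O : pt -> Prop) (d : pt -> pt -> R) : Prop :=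
  forall x y, O x -> O y -> forall eps, 0 < eps ->
    exists l, pw_path n O x y l /\ pw_length_le d l (d x y + eps).

Definition d_open (O : pt -> Prop) (d : pt -> pt -> R) (U : pt -> Prop) : Prop :=
  forall x, U x -> exists r, 0 < r /\ forall y, O y -> d x y < r -> U y.

Definition e_open_in (O : pt -> Prop) (U : pt -> Prop) : Prop :=
  forall x, U x -> exists r, 0 < r /\ forall y, O y -> edist x y < r -> U y.

(* Main.v *)
Require Import Defs.
From Stdlib Require Import Reals List Lra Lia.
Open Scope R_scope.

Lemma abs_fst_le (p q : pt) : Rabs (fst p - fst q) <= edist p q.
Proof.
  unfold edist. rewrite <- sqrt_Rsqr_abs. apply sqrt_le_1_alt.
  unfold Rsqr. simpl. pose proof (Rle_0_sqr (fst p - fst q)); pose proof (Rle_0_sqr (snd p - snd q)); unfold Rsqr in *; lra.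
Qed.

Lemma abs_snd_le (p q : pt) : Rabs (snd p - snd q) <= edist p q.
Proof.
  unfold edist. rewrite <- sqrt_Rsqr_abs. apply sqrt_le_1_alt.
  unfold Rsqr. simpl. pose proof (Rle_0_sqr (fst p - fst q)); pose proof (Rle_0_sqr (snd p - snd q)); unfold Rsqr in *; lra.
Qed.

Lemma edist_le_sum (p q : pt) :
  edist p q <= Rabs (fst p - fst q) + Rabs (snd p - snd q).
Proof.
  unfold edist. set (a := fst p - fst q). set (b := snd p - snd q).
  assert (H : 0 <= Rabs a + Rabs b) by (pose proof (Rabs_pos a); pose proof (Rabs_pos b); lra).
  rewrite <- (sqrt_square (Rabs a + Rabs b)) by exact H.
  apply sqrt_le_1_alt.
  assert (a ^ 2 = Rabs a * Rabs a) by (rewrite <- Rabs_mult; rewrite Rabs_right; [ring| nra]).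
  assert (b ^ 2 = Rabs b * Rabs b) by (rewrite <- Rabs_mult; rewrite Rabs_right; [ring| nra]).
  pose proof (Rabs_pos a); pose proof (Rabs_pos b). nra.
Qed.

Lemma edist_refl (p : pt) : edist p p = 0.
Proof. unfold edist. replace ((fst p - fst p) ^ 2 + (snd p - snd p) ^ 2) with 0 by ring. apply sqrt_0. Qed.

Definition N (p q : pt) : R := Rmax (Rabs (fst p - fst q)) (Rabs (snd p - snd q)).

Lemma N_lip (x p q : pt) : Rabs (N x p - N x q) <= edist p q.
Proof.
  pose proof (abs_fst_le p q). pose proof (abs_snd_le p q).
  unfold N. revert H H0. destruct x as [x1 x2], p as [p1 p2], q as [q1 q2]; simpl.
  unfold Rmax; repeat destruct Rle_dec; unfold Rabs in *; repeat destruct Rcase_abs; lra.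
Qed.

Lemma edist_le_N (p q : pt) : edist p q <= 2 * N p q.
Proof.
  pose proof (edist_le_sum p q). unfold N in *.
  pose proof (Rmax_l (Rabs (fst p - fst q)) (Rabs (snd p - snd q))).
  pose proof (Rmax_r (Rabs (fst p - fst q)) (Rabs (snd p - snd q))). lra.
Qed.

Definition clamp (a b t : R) : R := Rmax a (Rmin b t).

Lemma clamp_in a b t : a <= b -> a <= clamp a b t <= b.
Proof. intros. unfold clamp, Rmax, Rmin; repeat destruct Rle_dec; lra. Qed.

Lemma clamp_lip a b t s : a <= b -> Rabs (clamp a b t - clamp a b s) <= Rabs (t - s).
Proof. intros. unfold clamp, Rmax, Rmin; repeat destruct Rle_dec; unfold Rabs; repeat destruct Rcase_abs; lra. Qed.

Lemma clamp_id a b t : a <= t <= b -> clamp a b t = t.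
Proof. intros. unfold clamp, Rmax, Rmin; repeat destruct Rle_dec; lra. Qed.

Lemma cont_eps (f : R -> R) t0 :
  (forall eps, 0 < eps -> exists delta, 0 < delta /\ forall t, Rabs (t - t0) < delta -> Rabs (f t - f t0) < eps) ->
  continuity_pt f t0.
Proof.
  intros H eps Heps. destruct (H eps Heps) as [dl [Hd Hf]]. exists dl. split; [lra|].
  intros t [_ Ht]. simpl in *. unfold R_dist in *. apply Hf; auto.
Qed.

Definition t1 (j : nat) : R := match j with O => 0 | _ => 1 end.
Definition t2 (t : R) (j : nat) : R := match j with O => 0 | 1%nat => t | _ => 1 end.

Lemma piece_le n O d g a w m : Cn_path n O g a w -> length_le d g m -> d a w <= m.
Proof.
  intros [_ [_ [_ [_ [Ha Hw]]]]] Hl.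
  assert (P : Defs.partition t1 1) by (split; [reflexivity| split; [reflexivity|]]; intros j Hj; destruct j; [simpl; lra| lia]).
  specialize (Hl _ _ P). simpl in Hl. rewrite Ha, Hw in Hl. lra.
Qed.

Lemma path_le n O d a y l M : is_distance O d -> pw_path n O a y l -> pw_length_le d l M -> d a y <= M.
Proof.
  intros Hd Hp. revert M. induction Hp; intros M HM.
  - destruct HM as [m [Hm HM]]. simpl in HM. pose proof (piece_le _ _ _ _ _ _ _ H Hm). lra.
  - destruct HM as [m [Hm HM]]. pose proof (piece_le _ _ _ _ _ _ _ H Hm).
    specialize (IHHp _ HM).
    destruct H as [HO [_ [_ [_ [Hx Hz]]]]].
    assert (Ox : O x) by (rewrite <- Hx; apply HO; lra).
    assert (Oz : O z) by (rewrite <- Hz; apply HO; lra).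
    assert (Oy : O y).
    { clear -Hp. induction Hp; destruct H as [HO [_ [_ [_ [_ Hz]]]]]; auto. rewrite <- Hz; apply HO; lra. }
    destruct Hd as [_ [_ [_ Ht]]]. specialize (Ht x z y Ox Oz Oy). lra.
Qed.

Lemma crossing n O d g a w m x rho :
  is_distance O d -> Cn_path n O g a w -> length_le d g m -> N x a < rho -> rho <= N x w ->
  exists z, O z /\ N x z = rho /\ d a z <= m.
Proof.
  intros Hd Hg Hl Ha Hw.
  pose proof Hg as Hg'; destruct Hg' as [HO [Hc [_ [_ [Hg0 Hg1]]]]].
  destruct (Req_dec (N x w) rho) as [E|E].
  { exists w. split; [rewrite <- Hg1; apply HO; lra|]. split; auto. eapply piece_le; eauto. }
  set (f := fun t => N x (g (clamp 0 1 t)) - rho).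
  assert (Cf : continuity f).
  { intro t0. apply cont_eps. intros eps Heps.
    destruct (Hc (clamp 0 1 t0) (clamp_in 0 1 t0 ltac:(lra)) eps Heps) as [dl [Hdl Hs]].
    exists dl. split; auto. intros t Ht. unfold f.
    replace (N x (g (clamp 0 1 t)) - rho - (N x (g (clamp 0 1 t0)) - rho)) with
      (N x (g (clamp 0 1 t)) - N x (g (clamp 0 1 t0))) by ring.
    eapply Rle_lt_trans. apply N_lip.
    unfold edist. replace ((fst (g (clamp 0 1 t)) - fst (g (clamp 0 1 t0))) ^ 2 +
      (snd (g (clamp 0 1 t)) - snd (g (clamp 0 1 t0))) ^ 2) with
      ((fst (g (clamp 0 1 t0)) - fst (g (clamp 0 1 t))) ^ 2 +
      (snd (g (clamp 0 1 t0)) - snd (g (clamp 0 1 t))) ^ 2) by ring.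
    apply Hs. apply clamp_in; lra. pose proof (clamp_lip 0 1 t t0 ltac:(lra)). lra. }
  assert (f0 : f 0 < 0) by (unfold f; rewrite clamp_id by lra; rewrite Hg0; lra).
  assert (f1 : 0 < f 1) by (unfold f; rewrite clamp_id by lra; rewrite Hg1; lra).
  destruct (IVT f 0 1 Cf ltac:(lra) f0 f1) as [t [Ht Hft]].
  unfold f in Hft. rewrite clamp_id in Hft by lra.
  assert (t <> 0) by (intro E0; rewrite E0, Hg0 in Hft; lra).
  assert (t <> 1) by (intro E0; rewrite E0, Hg1 in Hft; lra).
  exists (g t). split; [apply HO; lra|]. split; [lra|].
  assert (P : Defs.partition (t2 t) 2).
  { split; [reflexivity| split; [reflexivity|]]. intros j Hj. destruct j as [|[|j]]; simpl; try lra; lia. }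
  specialize (Hl _ _ P). simpl in Hl. rewrite Hg0, Hg1 in Hl.
  destruct Hd as [Hpos _]. assert (0 <= d (g t) w) by (apply Hpos; [apply HO; lra| rewrite <- Hg1; apply HO; lra]).
  lra.
Qed.

Lemma cross_path n O d x rho a y l :
  is_distance O d -> pw_path n O a y l -> forall M, pw_length_le d l M -> N x a < rho -> rho <= N x y ->
  exists z, O z /\ N x z = rho /\ d a z <= M.
Proof.
  intros Hd Hp. induction Hp; intros M HM Ha Hy.
  - destruct HM as [m [Hm HM]]. simpl in HM.
    destruct (crossing _ _ _ _ _ _ _ _ _ Hd H Hm Ha Hy) as [z [? [? ?]]]. exists z. repeat split; auto; lra.
  - destruct HM as [m [Hm HM]].
    destruct (Rlt_or_le (N x z) rho) as [Hz|Hz].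
    + destruct (IHHp _ HM Hz Hy) as [w [Hw1 [Hw2 Hw3]]]. exists w. repeat split; auto.
      pose proof (piece_le _ _ _ _ _ _ _ H Hm).
      destruct H as [HO [_ [_ [_ [Hx Hz']]]]].
      assert (Ox : O x0) by (rewrite <- Hx; apply HO; lra).
      assert (Oz : O z) by (rewrite <- Hz'; apply HO; lra).
      destruct Hd as [_ [_ [_ Ht]]]. specialize (Ht x0 z w Ox Oz Hw1). lra.
    + destruct (crossing _ _ _ _ _ _ _ _ _ Hd H Hm Ha Hz) as [w [? [? ?]]]. exists w. repeat split; auto.
      pose proof (path_le _ _ _ _ _ _ _ Hd Hp HM).
      destruct H as [HO [_ [_ [_ [Hx Hz']]]]].
      assert (Oz : O z) by (rewrite <- Hz'; apply HO; lra).
      assert (Oy : O y).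
      { clear -Hp. induction Hp; destruct H as [HO [_ [_ [_ [_ Hz]]]]]; auto. rewrite <- Hz; apply HO; lra. }
      destruct Hd as [Hpos _]. pose proof (Hpos z y Oz Oy). lra.
Qed.

Lemma side_min O d x rho (p : R -> pt) :
  is_distance O d -> d_continuous O d -> O x -> 0 < rho ->
  (forall s t, edist (p s) (p t) <= Rabs (s - t)) ->
  (forall s, -rho <= s <= rho -> O (p s) /\ p s <> x) ->
  exists m, 0 < m /\ forall s, -rho <= s <= rho -> m <= d x (p s).
Proof.
  intros Hd Hc Ox Hr Hp Hin.
  set (phi := fun s => d x (p (clamp (-rho) rho s))).
  assert (C : forall c, -rho <= c <= rho -> continuity_pt phi c).
  { intros c _. apply cont_eps. intros eps Heps.
    pose proof (clamp_in (-rho) rho c ltac:(lra)) as Hcc.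
    destruct (Hc x (p (clamp (-rho) rho c)) Ox (proj1 (Hin _ Hcc)) eps Heps) as [dl [Hdl H]].
    exists dl. split; auto. intros t Ht. unfold phi.
    apply H; auto. apply Hin, clamp_in; lra. rewrite edist_refl; auto.
    eapply Rle_lt_trans. apply Hp. eapply Rle_lt_trans. apply clamp_lip. lra.
    rewrite Rabs_minus_sym. auto. }
  destruct (continuity_ab_min phi (-rho) rho ltac:(lra) C) as [mx [Hmin Hmx]].
  exists (phi mx). split.
  - unfold phi. rewrite clamp_id by lra. destruct (Hin mx Hmx) as [Om Hne].
    destruct Hd as [Hpos [Hz _]]. destruct (Rle_lt_or_eq_dec _ _ (Hpos x (p mx) Ox Om)); auto.
    exfalso. apply Hne. symmetry. apply (Hz x (p mx) Ox Om). auto.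
  - intros s Hs. specialize (Hmin s Hs). unfold phi in Hmin at 2. rewrite clamp_id in Hmin by lra. auto.
Qed.

Lemma square_min O d x rho :
  is_distance O d -> d_continuous O d -> O x -> 0 < rho ->
  (forall q, N x q <= rho -> O q) ->
  exists m, 0 < m /\ forall z, N x z = rho -> m <= d x z.
Proof.
  intros Hd Hc Ox Hr Hsq. destruct x as [x1 x2].
  assert (Hlip : forall a b c e s t, fst (a + b * s, c + e * t) = a + b * s -> True) by auto.
  destruct (side_min O d (x1, x2) rho (fun s => (x1 + rho, x2 + s)) Hd Hc Ox Hr) as [m1 [Hm1 H1]].
  { intros s t. eapply Rle_trans. apply edist_le_sum. simpl.
    replace (x1 + rho - (x1 + rho)) with 0 by ring. replace (x2 + s - (x2 + t)) with (s - t) by ring.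
    rewrite Rabs_R0. lra. }
  { intros s Hs. split. apply Hsq. unfold N; simpl. unfold Rmax; repeat destruct Rle_dec; unfold Rabs; repeat destruct Rcase_abs; lra.
    intro E. injection E. lra. }
  destruct (side_min O d (x1, x2) rho (fun s => (x1 - rho, x2 + s)) Hd Hc Ox Hr) as [m2 [Hm2 H2]].
  { intros s t. eapply Rle_trans. apply edist_le_sum. simpl.
    replace (x1 - rho - (x1 - rho)) with 0 by ring. replace (x2 + s - (x2 + t)) with (s - t) by ring.
    rewrite Rabs_R0. lra. }
  { intros s Hs. split. apply Hsq. unfold N; simpl. unfold Rmax; repeat destruct Rle_dec; unfold Rabs; repeat destruct Rcase_abs; lra.
    intro E. injection E. lra. }
  destruct (side_min O d (x1, x2) rho (fun s => (x1 + s, x2 + rho)) Hd Hc Ox Hr) as [m3 [Hm3 H3]].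
  { intros s t. eapply Rle_trans. apply edist_le_sum. simpl.
    replace (x2 + rho - (x2 + rho)) with 0 by ring. replace (x1 + s - (x1 + t)) with (s - t) by ring.
    rewrite Rabs_R0. lra. }
  { intros s Hs. split. apply Hsq. unfold N; simpl. unfold Rmax; repeat destruct Rle_dec; unfold Rabs; repeat destruct Rcase_abs; lra.
    intro E. injection E. lra. }
  destruct (side_min O d (x1, x2) rho (fun s => (x1 + s, x2 - rho)) Hd Hc Ox Hr) as [m4 [Hm4 H4]].
  { intros s t. eapply Rle_trans. apply edist_le_sum. simpl.
    replace (x2 - rho - (x2 - rho)) with 0 by ring. replace (x1 + s - (x1 + t)) with (s - t) by ring.
    rewrite Rabs_R0. lra. }
  { intros s Hs. split. apply Hsq. unfold N; simpl. unfold Rmax; repeat destruct Rle_dec; unfold Rabs; repeat destruct Rcase_abs; lra.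
    intro E. injection E. lra. }
  exists (Rmin (Rmin m1 m2) (Rmin m3 m4)). split.
  { unfold Rmin; repeat destruct Rle_dec; lra. }
  intros [z1 z2] Hz. unfold N in Hz; simpl in Hz.
  assert (Hmin : Rmin (Rmin m1 m2) (Rmin m3 m4) <= m1 /\ Rmin (Rmin m1 m2) (Rmin m3 m4) <= m2 /\
     Rmin (Rmin m1 m2) (Rmin m3 m4) <= m3 /\ Rmin (Rmin m1 m2) (Rmin m3 m4) <= m4)
    by (unfold Rmin; repeat destruct Rle_dec; lra).
  unfold Rmax in Hz; destruct Rle_dec as [Hle|Hle];
  unfold Rabs in *; destruct (Rcase_abs (x1 - z1)); destruct (Rcase_abs (x2 - z2)).
  all: first
    [ specialize (H1 (z2 - x2) ltac:(lra)); replace (x1 + rho, x2 + (z2 - x2)) with (z1, z2) in H1 by (f_equal; lra); lra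
    | specialize (H2 (z2 - x2) ltac:(lra)); replace (x1 - rho, x2 + (z2 - x2)) with (z1, z2) in H2 by (f_equal; lra); lra
    | specialize (H3 (z1 - x1) ltac:(lra)); replace (x1 + (z1 - x1), x2 + rho) with (z1, z2) in H3 by (f_equal; lra); lra
    | specialize (H4 (z1 - x1) ltac:(lra)); replace (x1 + (z1 - x1), x2 - rho) with (z1, z2) in H4 by (f_equal; lra); lra ].
Qed.

Theorem mainTheorem3 (n : nat) (O : pt -> Prop) (d : pt -> pt -> R) :
  domain O -> is_distance O d -> d_continuous O d -> inner n O d ->
  forall U : pt -> Prop, (forall x, U x -> O x) ->
    (d_open O d U <-> e_open_in O U).
Proof.
  intros [_ [HOo _]] Hd Hc Hin U HU. split.
  - intros Hdo x Ux. destruct (Hdo x Ux) as [r [Hr H]].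
    destruct (Hc x x (HU x Ux) (HU x Ux) r Hr) as [dl [Hdl H2]].
    exists dl. split; auto. intros y Oy Hy. apply H; auto.
    specialize (H2 x y (HU x Ux) Oy ltac:(rewrite edist_refl; auto) Hy).
    destruct Hd as [_ [Hz _]]. assert (d x x = 0) by (apply Hz; auto; apply HU; auto).
    rewrite H0 in H2. unfold Rabs in H2; destruct Rcase_abs; lra.
  - intros He x Ux. pose proof (HU x Ux) as Ox.
    destruct (He x Ux) as [r [Hr H]]. destruct (HOo x Ox) as [r0 [Hr0 H0]].
    set (rho := Rmin r r0 / 4).
    assert (Hrho : 0 < rho) by (unfold rho, Rmin; destruct Rle_dec; lra).
    assert (Hrr : 2 * rho < r /\ 2 * rho < r0) by (unfold rho, Rmin; destruct Rle_dec; lra).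
    destruct (square_min O d x rho Hd Hc Ox Hrho) as [m [Hm Hmz]].
    { intros q Hq. apply H0. pose proof (edist_le_N x q). lra. }
    exists m. split; auto. intros y Oy Hy.
    assert (Ny : N x y < rho).
    { destruct (Rlt_or_le (N x y) rho) as [|Hle]; auto. exfalso.
      destruct (Hin x y Ox Oy ((m - d x y) / 2) ltac:(lra)) as [l [Hp Hl]].
      assert (Nxx : N x x < rho) by (unfold N; replace (fst x - fst x) with 0 by ring;
        replace (snd x - snd x) with 0 by ring; rewrite Rabs_R0, Rmax_left; lra).
      destruct (cross_path _ _ _ _ _ _ _ _ Hd Hp _ Hl Nxx Hle) as [z [Oz [Nz Hdz]]].
      specialize (Hmz z Nz). lra. }
    apply H; auto. pose proof (edist_le_N x y). lra.
Qed.
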